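(* The advised language family $\mathrm{1QFA}/n$ does not satisfy the partial order condition; specifically, the language $L_a=\{wa\mid w\in\{a,b\}^*\}$ over $\Sigma=\{a,b\}$, which violates the partial order condition, belongs to $\mathrm{1QFA}/n$.
   Context: A 1qfa is a one-way measure-many quantum finite automaton (input between endmarkers $\cent$ and $\$$, one unitary per scanned symbol followed by a projection measurement onto accepting/rejecting/non-halting subspaces at every step). For equal-length strings $x\in\Sigma^n,y\in\Gamma^n$, $\genfrac{[}{]}{0pt}{}{x}{y}$ is the two-track string with $x$ on the upper track and $y$ on the lower track. $\mathrm{1QFA}/n$ is the family of languages $L$ for which there exist a 1qfa $M$, $\varepsilon\in[0,1/2)$, an advice alphabet $\Gamma$ and an advice function $h:\mathbb{N}\to\Gamma^*$ with $|h(n)|=n$ such that $M$ on input $\genfrac{[}{]}{0pt}{}{x}{h(|x|)}$ outputs $L(x)$ (1 if $x\in L$, 0 otherwise) with probability at least $1-\varepsilon$ for every $x$. A language satisfies the partial order condition (Brodsky–Pippenger) exactly when its minimal deterministic finite automaton (with transition function extended to strings $\hat\delta$) contains no two inner states $q_1,q_2$ such that (i) there is a string $z$ with $\hat\delta(q_1,z)$ accepting and $\hat\delta(q_2,z)$ not accepting or vice versa, and (ii) there are nonempty strings $x,y$ with $\hat\delta(q_1,x)=\hat\delta(q_2,x)=q_2$ and $\hat\delta(q_2,y)=q_1$. Every language recognized by a bounded-error 1qfa without advice satisfies this condition. *)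

(* Defs.v *)
From HB Require Import structures.
From mathcomp Require Import all_boot all_order all_algebra.
From mathcomp Require Import complex.
From mathcomp Require Import Rstruct.
Set Implicit Arguments. Unset Strict Implicit. Unset Printing Implicit Defensive.
Import Order.TTheory GRing.Theory Num.Theory.
Local Open Scope ring_scope.

Definition RR := Rdefinitions.R.
Definition CC := RR[i].

Definition sqmod (z : CC) : RR := (complex.Re z) ^+ 2 + (complex.Im z) ^+ 2.

Record dfa (S : Type) := DFA {
  dstate : finType;
  dstart : dstate;
  ddelta : dstate -> S -> dstate;
  dfinal : pred dstate }.

Definition dhat (S : Type) (D : dfa S) (q : dstate D) (w : seq S) : dstate D :=
  foldl (@ddelta S D) q w.

Definition minimal_dfa_of (S : Type) (D : dfa S) (L : seq S -> Prop) : Prop :=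
  [/\ (forall w, L w <-> @dfinal S D (dhat (dstart D) w)),
      (forall q : dstate D, exists w, dhat (dstart D) w = q) &
      (forall q1 q2 : dstate D, q1 <> q2 ->
         exists z, @dfinal S D (dhat q1 z) != @dfinal S D (dhat q2 z))].

Definition poc_pattern (S : Type) (D : dfa S) (q1 q2 : dstate D) : Prop :=
  (exists z, @dfinal S D (dhat q1 z) != @dfinal S D (dhat q2 z)) /\
  (exists x y : seq S, x <> [::] /\ y <> [::] /\
     dhat q1 x = q2 /\ dhat q2 x = q2 /\ dhat q2 y = q1).

Definition partial_order_condition (S : Type) (L : seq S -> Prop) : Prop :=
  forall D : dfa S, minimal_dfa_of D L ->
    ~ exists q1 q2 : dstate D, poc_pattern q1 q2.

Inductive tsym (T : Type) := Cent | Dollar | Sym of T.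
Arguments Cent {T}. Arguments Dollar {T}.

Definition unitary (N : nat) (U : 'M[CC]_N) : Prop :=
  U *m (map_mx (@conjc _) U)^T = 1%:M.

(* A 1qfa over tape alphabet T: an orthonormal basis indexed by 'I_qdim,
   one matrix per tape symbol, an initial basis state, and the accepting and
   rejecting basis states (the others are non-halting). *)
Record qfa (T : Type) := QFA {
  qdim : nat;
  qU : tsym T -> 'M[CC]_qdim;
  qstart : 'I_qdim;
  qacc : {set 'I_qdim};
  qrej : {set 'I_qdim} }.

Definition qnon (T : Type) (M : qfa T) : {set 'I_(qdim M)} :=
  ~: (qacc M :|: qrej M).

Definition wf_qfa (T : Type) (M : qfa T) : Prop :=
  [/\ forall s, unitary (qU M s),
      [disjoint qacc M & qrej M] &
      qstart M \in qnon M].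

Definition proj (N : nat) (A : {set 'I_N}) (psi : 'cV[CC]_N) : 'cV[CC]_N :=
  \col_i (if i \in A then psi i ord0 else 0).

Definition prob (N : nat) (A : {set 'I_N}) (psi : 'cV[CC]_N) : RR :=
  \sum_(i in A) sqmod (psi i ord0).

(* Run the 1qfa on a tape starting from the (unnormalized) state psi:
   at each step apply the unitary of the scanned symbol, then measure;
   returns (acceptance probability, rejection probability). *)
Fixpoint qrun (T : Type) (M : qfa T) (w : seq (tsym T)) (psi : 'cV[CC]_(qdim M)) {struct w}
  : RR * RR :=
  match w with
  | [::] => (0, 0)
  | s :: w' =>
      let phi := qU M s *m psi in
      let r := @qrun T M w' (proj (qnon M) phi) in
      (prob (qacc M) phi + r.1, prob (qrej M) phi + r.2)
  end.

Definition ket (N : nat) (q : 'I_N) : 'cV[CC]_N := \col_i (if i == q then 1 else 0).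

Definition tape (T : Type) (w : seq T) : seq (tsym T) :=
  Cent :: rcons (map (@Sym T) w) Dollar.

Definition acc_prob (T : Type) (M : qfa T) (w : seq T) : RR :=
  (@qrun T M (tape w) (ket (qstart M))).1.
Definition rej_prob (T : Type) (M : qfa T) (w : seq T) : RR :=
  (@qrun T M (tape w) (ket (qstart M))).2.

Definition two_track (S G : Type) (x : seq S) (y : seq G) : seq (S * G) := zip x y.

Definition in_1QFA_n (S : Type) (L : seq S -> Prop) : Prop :=
  exists (G : finType) (M : qfa (S * G)) (eps : RR) (h : nat -> seq G),
    [/\ wf_qfa M, 0 <= eps < 1/2, (forall n, size (h n) = n) &
        forall x : seq S,
          (L x -> 1 - eps <= acc_prob M (two_track x (h (size x)))) /\
          (~ L x -> 1 - eps <= rej_prob M (two_track x (h (size x))))].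

Inductive ab := sa | sb.

Definition L_a (x : seq ab) : Prop := exists w, x = rcons w sa.

(* Main.v *)
Require Import Defs.
From mathcomp Require Import all_boot all_order all_algebra all_fingroup.
From mathcomp Require Import complex Rstruct.
Set Implicit Arguments. Unset Strict Implicit. Unset Printing Implicit Defensive.
Import Order.TTheory GRing.Theory Num.Theory.
Local Open Scope ring_scope.

Definition o0 : 'I_3 := @Ordinal 3 0 isT.
Definition o1 : 'I_3 := @Ordinal 3 1 isT.
Definition o2 : 'I_3 := @Ordinal 3 2 isT.

Definition sig3 (s : tsym (ab * bool)) : 'S_3 :=
  match s with
  | Cent => 1%g
  | Dollar => tperm o0 o2
  | Defs.Sym (sa, true) => tperm o0 o1
  | Defs.Sym (sb, true) => tperm o0 o2
  | Defs.Sym (_, false) => 1%g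
  end.

Definition Mq : qfa (ab * bool) :=
  @QFA _ 3 (fun s => perm_mx (sig3 s)) o0 [set o1] [set o2].

Lemma unitary_perm (s : 'S_3) : unitary (perm_mx s : 'M[CC]_3).
Proof.
rewrite /unitary.
have -> : map_mx (@conjc _) (perm_mx s : 'M[CC]_3) = perm_mx s.
  apply/matrixP => i j; rewrite !mxE.
  exact: conjc_nat.
by rewrite tr_perm_mx -perm_mxM mulgV perm_mx1.
Qed.

Lemma perm_ket (s : 'S_3) q : (perm_mx s : 'M[CC]_3) *m ket q = ket (s^-1%g q).
Proof.
rewrite -row_permE; apply/matrixP => i j; rewrite !mxE.
by rewrite -(inj_eq (@perm_inj _ s^-1%g)) permK.
Qed.

Lemma sqmod1 : sqmod 1 = 1.
Proof. by rewrite /sqmod /= expr1n expr0n addr0. Qed.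
Lemma sqmod0 : sqmod 0 = 0.
Proof. by rewrite /sqmod /= expr0n addr0. Qed.

Lemma prob1_ket (a q : 'I_3) : prob [set a] (ket q) = if a == q then 1 else 0.
Proof.
by rewrite /prob big_set1 !mxE; case: (a == q); rewrite ?sqmod1 ?sqmod0.
Qed.

Lemma proj_ket (A : {set 'I_3}) q :
  proj A (ket q) = if q \in A then ket q else 0.
Proof.
case: ifP => hq; apply/matrixP => i j; rewrite !mxE //;
  case: (eqVneq i q) => [->|ne]; rewrite ?hq ?eqxx ?(negbTE ne) //; by case: ifP.
Qed.

Lemma prob0 (A : {set 'I_3}) : prob A 0 = 0.
Proof. by rewrite /prob big1 // => i _; rewrite mxE sqmod0. Qed.

Lemma proj0 (A : {set 'I_3}) : proj A 0 = 0.
Proof. by apply/matrixP => i j; rewrite !mxE; case: ifP. Qed.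

Lemma qrun0 w : qrun (M := Mq) w 0 = (0, 0).
Proof.
elim: w => //= s w IH; by rewrite mulmx0 proj0 IH !prob0 !addr0.
Qed.

Lemma qnonE : qnon Mq = [set o0].
Proof. by apply/setP => i; rewrite !inE; case: i => [[|[|[|]]]]. Qed.

Lemma qrun_idle l r : all (fun s => sig3 s == 1%g) l ->
  qrun (M := Mq) (l ++ r) (ket o0) = qrun (M := Mq) r (ket o0).
Proof.
elim: l => //= s l IH /andP[/eqP hs hl].
rewrite /= hs perm_ket invg1 perm1 proj_ket qnonE inE eqxx IH // !prob1_ket /=.
by rewrite !add0r; case: (qrun _ _).
Qed.

Definition Dab : dfa ab :=
  @DFA ab bool false (fun _ s => if s is sa then true else false) (fun b => b).

Lemma dhat_rcons q w c : dhat (D := Dab) q (rcons w c) = (if c is sa then true else false).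
Proof. by rewrite /dhat foldl_rcons. Qed.

Lemma La_rcons w c : L_a (rcons w c) <-> c = sa.
Proof.
split; last by move=> ->; exists w.
case=> w' e; have := congr1 (last sa) e; rewrite !last_rcons; by [].
Qed.

Lemma La_nil : ~ L_a [::].
Proof. by case=> w; case: w. Qed.

Definition hadv (n : nat) : seq bool :=
  if n is n'.+1 then rcons (nseq n' false) true else [::].

Lemma idle_zip (x : seq ab) :
  all (fun s => sig3 s == 1%g) (Cent :: map (@Defs.Sym _) (zip x (nseq (size x) false))).
Proof.
elim: x => [|c x IH]; first by rewrite /= eqxx.
by move: IH; rewrite /= => /andP[_ ->]; case: c; rewrite eqxx.
Qed.

Theorem lemma3p3 :
  ~ partial_order_condition L_a /\ in_1QFA_n L_a.
Proof.
split.
  move=> H; apply: (H Dab).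
    split.
    - move=> w; case/lastP: w => [|w c].
        by split => // /La_nil.
      by rewrite La_rcons dhat_rcons; case: c.
    - by case; [exists [:: sa] | exists [::]].
    - by move=> q1 q2 ne; exists [::]; move: ne; case: q1; case: q2.
  exists false, true; split; first by exists [::].
  by exists [:: sa], [:: sb].
exists bool, Mq, 0, hadv; split.
- split.
  + by move=> s; apply: unitary_perm.
  + by rewrite -setI_eq0; apply/eqP/setP => i; rewrite !inE; case: i => [[|[|[|]]]].
  + by rewrite qnonE inE.
- by rewrite lexx /= divr_gt0 // ltr0n.
- by case=> //= n; rewrite size_rcons size_nseq.
move=> x; case/lastP: x => [|x c].
  split; first by move/La_nil.
  move=> _; rewrite /rej_prob /tape /=.
  rewrite !perm_ket !proj_ket qnonE !inE /= invg1 perm1 eqxx perm_ket tpermV tpermL !prob1_ket /=.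
  by rewrite subr0 add0r addr0.
rewrite size_rcons /hadv /two_track zip_rcons ?size_nseq //.
set z := zip x _.
have Ht : tape (rcons z (c, true)) =
  (Cent :: map (@Defs.Sym _) z) ++ [:: Defs.Sym (c, true); Dollar].
  by rewrite /tape map_rcons -!cats1 -catA.
rewrite /acc_prob /rej_prob Ht qrun_idle; last exact: idle_zip.
rewrite La_rcons /=.
clear Ht.
  have e10 : (o1 == o0) = false by [].
  have e20 : (o2 == o0) = false by [].
  have e12 : (o1 == o2) = false by [].
  have e21 : (o2 == o1) = false by [].
case: c => /=; rewrite !perm_ket !proj_ket qnonE !inE /=;
  rewrite !tpermV !tpermL.
  rewrite e10 mulmx0 !prob0 !prob1_ket eqxx e21 !addr0 subr0.
  by split => // _; apply: lexx.
rewrite e20 mulmx0 !prob0 !prob1_ket eqxx e12 !addr0 subr0.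
by split => // _; apply: lexx.
Qed.
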